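(* Let $\mathbb H$ be the real quaternion algebra. Let $a,d\in\mathbb H$ be nonzero with $\Re(a)=0$ and $ad=-da$, let $m,n\in\mathbb R$, and let $f(z)=z^2+az+m+na+d$. Let $z_0$ be a root of $f$ (i.e. $z_0^2+az_0+m+na+d=0$), and let $r_0=\Re(z_0)$, $N_0=-\Im(z_0)^2$. If $n\neq0$, then $r_0$ is a root of $16r^6+(-8a^2+16m)r^4+(-a^2(4m-a^2)+4a^2n^2+4d^2)r^2-a^4n^2=0$ and $\Im(z_0)=-(2r_0+a)^{-1}\left(\frac{1}{2r_0}a(r_0+n)(2r_0+a)+d\right)$. If $n=0$, then either $r_0=0$, $N_0$ is a root of $N^2+(a^2-2m)N+m^2-d^2=0$ and $\Im(z_0)=-a^{-1}(m+d-N_0)$; or $r_0$ is a root of $16r^4+(-8a^2+16m)r^2-a^2(4m-a^2)+4d^2=0$ and $\Im(z_0)=-(2r_0+a)^{-1}\left(\frac12a(2r_0+a)+d\right)$.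
   Context: For $q=c_1+c_2i+c_3j+c_4k\in\mathbb H$, $\Re(q)=c_1$ and $\Im(q)=q-\Re(q)$. Under the hypotheses $a$ and $d$ are pure imaginary, so $a^2,d^2\in\mathbb R$. *)

(* Defs.v *)
From mathcomp Require Import all_boot all_order all_algebra.
From mathcomp Require Import reals.
Set Implicit Arguments. Unset Strict Implicit. Unset Printing Implicit Defensive.
Import Order.TTheory GRing.Theory Num.Theory.
Local Open Scope ring_scope.

(* q = c1 + c2 i + c3 j + c4 k *)
Record quat (R : Type) := Quat { qc1 : R; qc2 : R; qc3 : R; qc4 : R }.

Section Quat.
Variable R : realType.

Definition qreal (c : R) : quat R := Quat c 0 0 0.
Definition qzero : quat R := qreal 0.
Definition qone : quat R := qreal 1.

Definition qadd (p q : quat R) : quat R :=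
  Quat (qc1 p + qc1 q) (qc2 p + qc2 q) (qc3 p + qc3 q) (qc4 p + qc4 q).
Definition qopp (p : quat R) : quat R :=
  Quat (- qc1 p) (- qc2 p) (- qc3 p) (- qc4 p).
Definition qsub (p q : quat R) : quat R := qadd p (qopp q).

(* Hamilton product: i^2 = j^2 = k^2 = ijk = -1 *)
Definition qmul (p q : quat R) : quat R :=
  Quat (qc1 p * qc1 q - qc2 p * qc2 q - qc3 p * qc3 q - qc4 p * qc4 q)
       (qc1 p * qc2 q + qc2 p * qc1 q + qc3 p * qc4 q - qc4 p * qc3 q)
       (qc1 p * qc3 q - qc2 p * qc4 q + qc3 p * qc1 q + qc4 p * qc2 q)
       (qc1 p * qc4 q + qc2 p * qc3 q - qc3 p * qc2 q + qc4 p * qc1 q).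

Definition qnorm2 (p : quat R) : R :=
  qc1 p ^+ 2 + qc2 p ^+ 2 + qc3 p ^+ 2 + qc4 p ^+ 2.

(* inverse: conj(p) / |p|^2 (only used at nonzero arguments) *)
Definition qinv (p : quat R) : quat R :=
  let s := (qnorm2 p)^-1 in
  Quat (qc1 p * s) (- qc2 p * s) (- qc3 p * s) (- qc4 p * s).

Definition qexp (p : quat R) (n : nat) : quat R := iter n (qmul p) qone.

Definition qRe (p : quat R) : R := qc1 p.
Definition qIm (p : quat R) : quat R := qsub p (qreal (qRe p)).

End Quat.

(* Main.v *)
Require Import Defs.
From mathcomp Require Import all_boot all_order all_algebra.
From mathcomp Require Import reals.
Import Order.TTheory GRing.Theory Num.Theory.
Local Open Scope ring_scope.
From mathcomp Require Import ring lra.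

Lemma qsolve (R : realType) (Q X Y : quat R) :
  qnorm2 Q != 0 -> qmul Q X = qopp Y -> X = qopp (qmul (qinv Q) Y).
Proof.
case: Q X Y => q1 q2 q3 q4 [x1 x2 x3 x4] [y1 y2 y3 y4] hQ.
rewrite /qnorm2 /= in hQ.
rewrite /qmul /qopp /qinv /qnorm2 /= => -[h1 h2 h3 h4].
rewrite -[y1]opprK -h1 -[y2]opprK -h2 -[y3]opprK -h3 -[y4]opprK -h4.
by congr Quat; field.
Qed.

Lemma sextic_core {R : realType} {r n A N c m D : R} :
  m = c + N - r^+2 -> (4*r^+2+A)*N = c^+2 + (r+n)^+2*A + D ->
  2*r*c + (r+n)*A = 0 ->
  16*r^+6 + (8*A+16 * m)*r^+4 + (A^+2+4 * m * A-4*A*n^+2-4*D)*r^+2 - A^+2*n^+2 = 0.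
Proof.
move=> hm hN hh; subst m.
have hD : D = (4*r^+2+A)*N - c^+2 - (r+n)^+2*A by lra.
subst D.
transitivity ((2*r*c + (r+n)*A) * ((4*r^+2+A)*2*r + (2*r*c + (r+n)*A) - 2*(r+n)*A)).
  ring.
by rewrite hh mul0r.
Qed.


Section QL.
Variable R : realType.
Lemma qmulRR (s t : R) : qmul (qreal s) (qreal t) = qreal (s*t).
Proof. by rewrite /qmul /qreal /=; congr Quat; ring. Qed.
Lemma qaddRR (s t : R) : qadd (qreal s) (qreal t) = qreal (s+t).
Proof. by rewrite /qadd /qreal /=; congr Quat; ring. Qed.
Lemma qoppR (s : R) : qopp (qreal s) = qreal (- s).
Proof. by rewrite /qopp /qreal /=; congr Quat; ring. Qed.
Lemma qsubRR (s t : R) : qsub (qreal s) (qreal t) = qreal (s-t).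
Proof. by rewrite /qsub qoppR qaddRR. Qed.
Lemma qexpR (s : R) k : qexp (qreal s) k = qreal (s^+k).
Proof.
elim: k => [|k IH]; first by rewrite /qexp /= expr0.
by rewrite /qexp iterS -/(qexp _ k) IH qmulRR exprS.
Qed.
Lemma qexp2_pure (b c e : R) : qexp (Quat 0 b c e) 2 = qreal (-(b^+2+c^+2+e^+2)).
Proof. by rewrite /qexp /qmul /qone /qreal /=; congr Quat; ring. Qed.
Lemma qexp4_pure (b c e : R) : qexp (Quat 0 b c e) 4 = qreal ((b^+2+c^+2+e^+2)^+2).
Proof. by rewrite /qexp /qmul /qone /qreal /=; congr Quat; ring. Qed.
Lemma qmulRl (s b c e f : R) : qmul (qreal s) (Quat b c e f) = Quat (s*b) (s*c) (s*e) (s*f).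
Proof. by rewrite /qmul /qreal /=; congr Quat; ring. Qed.
Lemma qmulRr (s b c e f : R) : qmul (Quat b c e f) (qreal s) = Quat (b*s) (c*s) (e*s) (f*s).
Proof. by rewrite /qmul /qreal /=; congr Quat; ring. Qed.
Lemma qaddRQ (s b c e f : R) : qadd (qreal s) (Quat b c e f) = Quat (s+b) c e f.
Proof. by rewrite /qadd /qreal /=; congr Quat; ring. Qed.
Lemma qIm_eq (r x y w : R) : qIm (Quat r x y w) = Quat 0 x y w.
Proof. by rewrite /qIm /qsub /qadd /qopp /qreal /qRe /=; congr Quat; ring. Qed.
End QL.

Theorem mainTheorem18 (R : realType) (a d : quat R) (m n : R) (z0 : quat R) :
  a <> qzero R -> d <> qzero R ->
  qRe a = 0 ->
  qmul a d = qopp (qmul d a) ->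
  (* z0 is a root of f(z) = z^2 + a z + m + n a + d *)
  qadd (qadd (qadd (qadd (qexp z0 2) (qmul a z0)) (qreal m))
             (qmul (qreal n) a)) d = qzero R ->
  let r0 := qRe z0 in
  let N0 := qopp (qexp (qIm z0) 2) in
  let rq := qreal r0 in
  (n <> 0 ->
     qsub
       (qadd (qadd (qmul (qreal 16) (qexp rq 6))
                   (qmul (qadd (qmul (qreal (-8)) (qexp a 2)) (qmul (qreal 16) (qreal m)))
                         (qexp rq 4)))
             (qmul (qadd (qadd (qopp (qmul (qexp a 2)
                                         (qsub (qmul (qreal 4) (qreal m)) (qexp a 2))))
                               (qmul (qmul (qreal 4) (qexp a 2)) (qexp (qreal n) 2)))
                         (qmul (qreal 4) (qexp d 2)))
                   (qexp rq 2)))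
       (qmul (qexp a 4) (qexp (qreal n) 2)) = qzero R
     /\
     qIm z0 =
       qopp (qmul (qinv (qadd (qmul (qreal 2) rq) a))
                  (qadd (qmul (qmul (qmul (qinv (qmul (qreal 2) rq)) a)
                                    (qadd rq (qreal n)))
                              (qadd (qmul (qreal 2) rq) a))
                        d)))
  /\
  (n = 0 ->
     (r0 = 0
      /\ qsub (qadd (qadd (qexp N0 2)
                          (qmul (qsub (qexp a 2) (qmul (qreal 2) (qreal m))) N0))
                    (qexp (qreal m) 2))
              (qexp d 2) = qzero R
      /\ qIm z0 = qopp (qmul (qinv a) (qsub (qadd (qreal m) d) N0)))
     \/
     (qadd (qsub (qadd (qmul (qreal 16) (qexp rq 4))
                       (qmul (qadd (qmul (qreal (-8)) (qexp a 2)) (qmul (qreal 16) (qreal m)))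
                             (qexp rq 2)))
                 (qmul (qexp a 2) (qsub (qmul (qreal 4) (qreal m)) (qexp a 2))))
           (qmul (qreal 4) (qexp d 2)) = qzero R
      /\ qIm z0 =
           qopp (qmul (qinv (qadd (qmul (qreal 2) rq) a))
                      (qadd (qmul (qmul (qinv (qreal 2)) a) (qadd (qmul (qreal 2) rq) a))
                            d)))).
Proof.
case: a => a1 a2 a3 a4; case: d => d1 d2 d3 d4; case: z0 => r x y w.
move=> ha hd hRe hAD hF r0 N0 rq; subst r0 N0 rq.
rewrite /qRe /= in hRe; subst a1.
have -> : qRe (Quat r x y w) = r by [].
rewrite /qmul /qopp /= in hAD.
case: hAD => h1 h2 h3 h4.
rewrite /qadd /qexp /qmul /qreal /qzero /qone /= in hF.
case: hF => e1 e2 e3 e4.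
have hA : 0 < (a2^+2 + a3^+2 + a4^+2).
  have h0 : 0 <= (a2^+2 + a3^+2 + a4^+2) by rewrite addr_ge0 ?sqr_ge0 // addr_ge0 ?sqr_ge0.
  rewrite lt_def h0 andbT; apply/negP => /eqP h; apply: ha.
  have z2 : a2 = 0 by apply/eqP; rewrite -sqrf_eq0 eq_le sqr_ge0 andbT; nra.
  have z3 : a3 = 0 by apply/eqP; rewrite -sqrf_eq0 eq_le sqr_ge0 andbT; nra.
  have z4 : a4 = 0 by apply/eqP; rewrite -sqrf_eq0 eq_le sqr_ge0 andbT; nra.
  by rewrite z2 z3 z4.
have hA0 : (a2^+2 + a3^+2 + a4^+2) != 0 by rewrite gt_eqF.
have hd1 : d1 = 0.
  have k2 : a2 * d1 = 0 by lra.
  have k3 : a3 * d1 = 0 by lra.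
  have k4 : a4 * d1 = 0 by lra.
  have : (a2^+2 + a3^+2 + a4^+2) * d1 = 0.
    have -> : (a2^+2 + a3^+2 + a4^+2) * d1 = a2*(a2*d1) + a3*(a3*d1) + a4*(a4*d1) by ring.
    by rewrite k2 k3 k4; ring.
  by move/eqP; rewrite mulf_eq0 (negbTE hA0) /= => /eqP.
subst d1.
have hd2 : d2 = - (2*r*x + r*a2 + (a3*w - a4*y) + n*a2) by lra.
have hd3 : d3 = - (2*r*y + r*a3 + (a4*x - a2*w) + n*a3) by lra.
have hd4 : d4 = - (2*r*w + r*a4 + (a2*y - a3*x) + n*a4) by lra.
have hm : m = (a2*x + a3*y + a4*w) + (x^+2 + y^+2 + w^+2) - r^+2 by lra.
have had : a2*d2 + a3*d3 + a4*d4 = 0 by lra.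
have hdot : 2*r*(a2*x + a3*y + a4*w) + (r+n)*(a2^+2 + a3^+2 + a4^+2) = 0.
  by rewrite hd2 hd3 hd4 in had; lra.
have hnorm : (4*r^+2 + (a2^+2 + a3^+2 + a4^+2))*(x^+2 + y^+2 + w^+2) = (a2*x + a3*y + a4*w)^+2 + (r+n)^+2*(a2^+2 + a3^+2 + a4^+2) + (d2^+2 + d3^+2 + d4^+2).
  have e : (4*r^+2 + (a2^+2 + a3^+2 + a4^+2))*(x^+2 + y^+2 + w^+2) = (a2*x + a3*y + a4*w)^+2 + (r+n)^+2*(a2^+2 + a3^+2 + a4^+2) + (d2^+2 + d3^+2 + d4^+2) + 2*(r+n)*(a2*d2 + a3*d3 + a4*d4).
    by rewrite hd2 hd3 hd4; ring.
  by rewrite e had mulr0 addr0.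
have hQ : qnorm2 (qadd (qmul (qreal 2) (qreal r)) (Quat 0 a2 a3 a4)) != 0.
  rewrite /qnorm2 /qadd /qmul /qreal /= gt_eqF //.
  have := sqr_ge0 (2*r); lra.
clear e1 e2 e3 e4 h1 h2 h3 h4 ha hd.
split.
  move=> hn0.
  have hr : r != 0.
    apply/eqP => hr; subst r; apply: hn0.
    have : n * (a2^+2 + a3^+2 + a4^+2) = 0 by lra.
    by move/eqP; rewrite mulf_eq0 (negbTE hA0) orbF => /eqP.
  split.
    rewrite ?qexpR ?qexp2_pure ?qexp4_pure !(qmulRR, qaddRR, qsubRR, qoppR) /qzero; apply: (congr1 (@qreal R)).
    have S := sextic_core hm hnorm hdot; rewrite -[RHS]S; ring.
  apply: qsolve; first exact: hQ.
  have hinv : qinv (qmul (qreal 2) (qreal r)) = qreal (2*r)^-1.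
    by rewrite /qinv /qnorm2 /qmul /qreal /=; congr Quat; field.
  rewrite hinv.
  have hn : n = -(2*r*(a2*x + a3*y + a4*w) + r*(a2^+2 + a3^+2 + a4^+2))/(a2^+2 + a3^+2 + a4^+2).
    apply: (mulIf hA0); rewrite divfK //; lra.
  do 3 (rewrite ?qIm_eq ?qexpR ?qexp2_pure ?qexp4_pure ?(qmulRR, qaddRR, qsubRR, qoppR) ?(qmulRl, qmulRr, qaddRQ)).
  rewrite /qsub /qadd /qmul /qopp /qreal /qzero /=.
  congr Quat; rewrite ?hd2 ?hd3 ?hd4 hn; field; by rewrite ?hA0 ?hr.
move=> hn0; subst n.
have [hr|hr] := eqVneq r 0.
  left; subst r; split=> //; split.
    do 3 (rewrite ?qIm_eq ?qexpR ?qexp2_pure ?qexp4_pure ?(qmulRR, qaddRR, qsubRR, qoppR) ?(qmulRl, qmulRr, qaddRQ)); rewrite /qzero.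
    apply: (congr1 (@qreal R)).
    rewrite hm; lra.
  apply: qsolve.
    rewrite /qnorm2 /= gt_eqF //; lra.
  do 3 (rewrite ?qIm_eq ?qexpR ?qexp2_pure ?qexp4_pure ?(qmulRR, qaddRR, qsubRR, qoppR) ?(qmulRl, qmulRr, qaddRQ)).
  rewrite /qsub /qadd /qmul /qopp /qreal /qzero /=.
  congr Quat; lra.
right; split.
  do 3 (rewrite ?qIm_eq ?qexpR ?qexp2_pure ?qexp4_pure ?(qmulRR, qaddRR, qsubRR, qoppR) ?(qmulRl, qmulRr, qaddRQ)); rewrite /qzero.
  apply: (congr1 (@qreal R)).
  apply: (mulfI (expf_neq0 2 hr)); rewrite mulr0.
  have S := sextic_core hm hnorm hdot; rewrite -[RHS]S; ring.
apply: qsolve; first exact: hQ.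
have hinv2 : qinv (qreal 2) = qreal (R:=R) 2^-1.
  by rewrite /qinv /qnorm2 /qreal /=; congr Quat; field.
rewrite hinv2.
have h2 : 2*(a2*x + a3*y + a4*w) + (a2^+2 + a3^+2 + a4^+2) = 0.
  have : r * (2*(a2*x + a3*y + a4*w) + (a2^+2 + a3^+2 + a4^+2)) = 0 by lra.
  by move/eqP; rewrite mulf_eq0 (negbTE hr) /= => /eqP.
do 3 (rewrite ?qIm_eq ?qexpR ?qexp2_pure ?qexp4_pure ?(qmulRR, qaddRR, qsubRR, qoppR) ?(qmulRl, qmulRr, qaddRQ)).
rewrite /qsub /qadd /qmul /qopp /qreal /qzero /=.
congr Quat; lra.
Qed.
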